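(* Let $\{a_i,b_i\}$, $i\in\mathbb N_+$, be pairwise distinct two-element subsets of $U$, and let $\mathcal D_1$ be the edge-independent unbounded probabilistic graph in which $E(a_i,b_i)$ and $E(b_i,a_i)$ have marginal probability $p_{a_i,b_i}=p_{b_i,a_i}=1/i^4$ for each $i\in\mathbb N_+$ and all other facts have marginal probability $0$. Then $\mathcal D_1\in\mathsf{CQ}(\mathsf{TI})$.
   Context: Fix a countably infinite universe $U$ equipped with a linear order $<$. Facts are $R(u_1,\dots,u_{\mathrm{ar}(R)})$ with $R$ from a finite schema and $u_i\in U$; instances are finite sets of facts; $\mathrm{adom}(D)$ is the set of elements of $U$ occurring in $D$. A probabilistic database (PDB) is a discrete probability space $(\mathbb D,P)$ with $\mathbb D$ a nonempty countable set of instances; its possible worlds are the instances of positive probability. A graph database is an instance over a single binary relation $E$; it is simple if it has no fact $E(a,a)$ and undirected if $E(a,b)\in D$ implies $E(b,a)\in D$. An edge-independent unbounded probabilistic graph is a PDB $\mathcal D$ such that: every possible world is a simple undirected graph database; for every sequence of pairwise distinct two-element subsets $\{a_1,b_1\},\dots,\{a_k,b_k\}$ of $U$, the events $E(a_i,b_i)\in D$ are independent; and for every $n$ there is a possible world with more than $n$ facts. Such a PDB is determined by the marginals $p_{a,b}=\Pr(E(a,b)\in D)$. A PDB $\mathcal I$ is tuple-independent ($\mathsf{TI}$) if for all pairwise distinct facts $f_1,\dots,f_k$, $\Pr(f_1\in I,\dots,f_k\in I)=\prod_i\Pr(f_i\in I)$. A conjunctive query is a formula built from relational atoms $R(\bar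 u)$ ($\bar u$ variables or constants) and equality atoms using only $\exists,\wedge$, evaluated under active domain semantics; a CQ-view consists of one CQ $\Phi_R(x_1,\dots,x_{\mathrm{ar}(R)})$ per output relation $R$, mapping $D$ to the instance of all $R(\bar a)$ with $\bar a$ over $\mathrm{adom}(D)\cup\mathrm{adom}(\Phi_R)$ and $D\models\Phi_R[\bar a]$. The image of a PDB under a view is the push-forward distribution; $\mathsf{CQ}(\mathsf{TI})$ is the class of images of TI-PDBs under CQ-views. *)

(* Defs.v *)
From HB Require Import structures.
From mathcomp Require Import all_boot all_order all_algebra.
From mathcomp Require Import finmap.
From mathcomp Require Import boolp classical_sets reals ereal esum.
Set Implicit Arguments. Unset Strict Implicit. Unset Printing Implicit Defensive.
Import Order.TTheory GRing.Theory Num.Theory.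
Local Open Scope classical_set_scope.
Local Open Scope fset_scope.
Local Open Scope ring_scope.

(* The universe U is taken to be nat (countably infinite, linearly ordered). *)

Section Schema.
Variables (sig : finType) (ar : sig -> nat).

Definition fact := {r : sig & {ffun 'I_(ar r) -> nat}}.
Definition instance := {fset fact}.

Definition mkfact (r : sig) (u : {ffun 'I_(ar r) -> nat}) : fact := existT _ r u.

Definition adom (D : instance) : set nat :=
  [set a | exists2 f : fact, f \in D & exists i, projT2 f i = a].

Variable R : realType.

Definition Pr (P : instance -> R) (E : set instance) : R :=
  fine (\esum_(D in E) (P D)%:E).

Definition is_PDB (P : instance -> R) : Prop :=
  (forall D, 0 <= P D) /\ \esum_(D in [set: instance]) (P D)%:E = 1%E.

Definition possible_world (P : instance -> R) (D : instance) : Prop := 0 < P D.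

Definition is_TI (P : instance -> R) : Prop :=
  is_PDB P /\
  forall s : seq fact, uniq s ->
    Pr P [set D | all (fun f => f \in D) s] =
    \prod_(f <- s) Pr P [set D | f \in D].

Inductive term := TVar of nat | TConst of nat.

Inductive cq :=
| CRel (r : sig) of ('I_(ar r) -> term)
| CEq of term & term
| CAnd of cq & cq
| CEx of nat & cq.

Definition term_val (nu : nat -> nat) (t : term) : nat :=
  match t with TVar v => nu v | TConst c => c end.

Definition term_consts (t : term) : seq nat :=
  match t with TVar _ => [::] | TConst c => [:: c] end.
Definition term_vars (t : term) : seq nat :=
  match t with TVar v => [:: v] | TConst _ => [::] end.

Fixpoint cq_consts (phi : cq) : seq nat :=
  match phi with
  | CRel r ts => flatten [seq term_consts (ts i) | i <- enum 'I_(ar r)]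
  | CEq t1 t2 => term_consts t1 ++ term_consts t2
  | CAnd p q => cq_consts p ++ cq_consts q
  | CEx _ p => cq_consts p
  end.

Fixpoint cq_fv (phi : cq) : seq nat :=
  match phi with
  | CRel r ts => flatten [seq term_vars (ts i) | i <- enum 'I_(ar r)]
  | CEq t1 t2 => term_vars t1 ++ term_vars t2
  | CAnd p q => cq_fv p ++ cq_fv q
  | CEx v p => [seq w <- cq_fv p | w != v]
  end.

Definition upd (nu : nat -> nat) (v a : nat) : nat -> nat :=
  fun w => if w == v then a else nu w.

Fixpoint cq_sat (D : instance) (dom : set nat) (nu : nat -> nat) (phi : cq) : Prop :=
  match phi with
  | CRel r ts => mkfact [ffun i => term_val nu (ts i)] \in D
  | CEq t1 t2 => term_val nu t1 = term_val nu t2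
  | CAnd p q => cq_sat D dom nu p /\ cq_sat D dom nu q
  | CEx v p => exists2 a, dom a & cq_sat D dom (upd nu v a) p
  end.

End Schema.


(* A CQ Phi(x_1,...,x_k): a formula together with its (distinct) free-variable
   list x_1..x_k containing all free variables of the formula. *)
Record cq_k (sig : finType) (ar : sig -> nat) (k : nat) := CQk {
  cq_body : cq ar;
  cq_head : 'I_k -> nat;
}.

Definition cq_k_wf (sig : finType) (ar : sig -> nat) k (Phi : cq_k ar k) : Prop :=
  injective (cq_head Phi) /\
  {subset cq_fv (cq_body Phi) <= [seq cq_head Phi i | i <- enum 'I_k]}.

Definition cq_view (sig : finType) (ar : sig -> nat) (sig' : finType) (ar' : sig' -> nat) :=
  forall r' : sig', cq_k ar (ar' r').

Definition cq_view_wf (sig : finType) (ar : sig -> nat) (sig' : finType) (ar' : sig' -> nat)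
  (V : cq_view ar ar') : Prop := forall r', cq_k_wf (V r').

Definition ad_dom (sig : finType) (ar : sig -> nat) k (Phi : cq_k ar k) (D : instance ar) : set nat :=
  adom D `|` [set a | a \in cq_consts (cq_body Phi)].

Definition view_image (sig : finType) (ar : sig -> nat) (sig' : finType) (ar' : sig' -> nat)
  (V : cq_view ar ar') (D : instance ar) (D' : instance ar') : Prop :=
  forall (r' : sig') (u : {ffun 'I_(ar' r') -> nat}),
    mkfact u \in D' <->
    ((forall i, ad_dom (V r') D (u i)) /\
     forall nu : nat -> nat, (forall i, nu (cq_head (V r') i) = u i) ->
       cq_sat D (ad_dom (V r') D) nu (cq_body (V r'))).

Definition image_PDB (R : realType) (sig : finType) (ar : sig -> nat) (sig' : finType) (ar' : sig' -> nat)
  (V : cq_view ar ar') (Q : instance ar -> R) : instance ar' -> R :=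
  fun D' => Pr Q [set D | view_image V D D'].

Definition in_CQ_TI (R : realType) (sig' : finType) (ar' : sig' -> nat)
  (P : instance ar' -> R) : Prop :=
  exists (sig : finType) (ar : sig -> nat) (Q : instance ar -> R) (V : cq_view ar ar'),
    is_TI Q /\ cq_view_wf V /\ forall D', P D' = image_PDB V Q D'.

Definition gsig := unit.
Definition gar : gsig -> nat := fun _ => 2.
Definition gfact := fact gar.
Definition ginstance := instance gar.

Definition Efact (a b : nat) : gfact :=
  @mkfact _ gar tt [ffun i : 'I_2 => if val i == 0%N then a else b].

Definition simple_graph (D : ginstance) : Prop := forall a, Efact a a \notin D.
Definition undirected_graph (D : ginstance) : Prop :=
  forall a b, Efact a b \in D -> Efact b a \in D.

Definition edge_indep_unbounded_graph (R : realType) (P : ginstance -> R) : Prop :=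
  is_PDB P /\
  (forall D, possible_world P D -> simple_graph D /\ undirected_graph D) /\
  (forall s : seq (nat * nat),
     all (fun e => e.1 != e.2) s ->
     uniq [seq [fset e.1; e.2] | e <- s] ->
     Pr P [set D | all (fun e => Efact e.1 e.2 \in D) s] =
     \prod_(e <- s) Pr P [set D | Efact e.1 e.2 \in D]) /\
  (forall n : nat, exists D, possible_world P D /\ (n < #|` D|)%N).

(* Main.v *)
Require Import Defs.
From HB Require Import structures.
From mathcomp Require Import all_boot all_order all_algebra.
From mathcomp Require Import finmap.
From mathcomp Require Import boolp classical_sets reals ereal esum.
From mathcomp Require Import cardinality fsbigop.
From mathcomp Require Import lra zify.
Import Order.TTheory GRing.Theory Num.Theory.
Set Implicit Arguments. Unset Strict Implicit. Unset Printing Implicit Defensive.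
Local Open Scope classical_set_scope.
Local Open Scope ring_scope.

Section PrGen.
Variables (R : realType) (T : choiceType) (P : T -> R).
Hypothesis P0 : forall D, 0 <= P D.
Hypothesis P1 : \esum_(D in [set: T]) (P D)%:E = 1%E.

Definition PrT (E : set T) : R := fine (\esum_(D in E) (P D)%:E).

Lemma es_ge0 E : (0 <= \esum_(D in E) (P D)%:E)%E.
Proof. by apply: esum_ge0 => x _; rewrite lee_fin. Qed.

Lemma es_le1 E : (\esum_(D in E) (P D)%:E <= 1)%E.
Proof.
rewrite esum_mkcond -P1; apply: le_esum => i _.
by case: ifP => _ //; rewrite lee_fin.
Qed.

Lemma es_fin E : \esum_(D in E) (P D)%:E = (PrT E)%:E.
Proof.
rewrite /PrT fineK // ge0_fin_numE ?es_ge0 //.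
by apply: (le_lt_trans (es_le1 E)); rewrite ltry.
Qed.

Lemma PrT_ge0 E : 0 <= PrT E.
Proof. by rewrite -lee_fin -es_fin es_ge0. Qed.

Lemma PrT_le1 E : PrT E <= 1.
Proof. by rewrite -lee_fin -es_fin es_le1. Qed.

Lemma PrT_split E F : PrT E = PrT (E `&` F) + PrT (E `&` ~` F).
Proof.
apply/eqP; rewrite -eqe EFinD -!es_fin; apply/eqP.
by apply: esumID => D _; rewrite lee_fin.
Qed.

Lemma PrT_le E F : E `<=` F -> PrT E <= PrT F.
Proof.
move=> EF; rewrite (PrT_split F E) (setIidr EF) lerDl; exact: PrT_ge0.
Qed.

Lemma PrT_ext E F : (forall D, P D != 0 -> (E D <-> F D)) -> PrT E = PrT F.
Proof.
move=> h; rewrite /PrT esum_mkcond [X in _ = fine X]esum_mkcond; congr fine.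
apply: eq_esum => D _; have [->|nz] := eqVneq (P D) 0.
  by case: ifP; case: ifP.
have [e1 e2] := h D nz.
case: ifPn => [/set_mem/e1/mem_set ->//|/negP hE].
case: ifPn => [/set_mem/e2/mem_set hF|//].
by exfalso; apply: hE.
Qed.

Lemma PrT_set1 D0 : PrT [set D0] = P D0.
Proof. by rewrite /PrT esum_set1 // lee_fin. Qed.

Lemma PrT_setT : PrT setT = 1.
Proof. by rewrite /PrT P1. Qed.

Lemma PrT_compl E : PrT E + PrT (~` E) = 1.
Proof. by by rewrite -PrT_setT (PrT_split setT E) !setTI. Qed.

Lemma PrT_lb_seq (s : seq T) E : uniq s -> (forall D, D \in s -> E D) ->
  \sum_(D <- s) P D <= PrT E.
Proof.
move=> us sE; rewrite -lee_fin -es_fin -sumEFin.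
apply: esum_ge; exists [set` s].
  by split; [exact: finite_seq| move=> D /= /sE].
by rewrite fsbig_seq.
Qed.

End PrGen.


Definition ff0 (f : gfact) : nat := projT2 f ord0.
Definition ff1 (f : gfact) : nat := projT2 f ord_max.

Lemma ff0E u v : ff0 (Efact u v) = u.
Proof. by rewrite /ff0 /Efact /mkfact /= ffunE. Qed.
Lemma ff1E u v : ff1 (Efact u v) = v.
Proof. by rewrite /ff1 /Efact /mkfact /= ffunE. Qed.

Lemma gfactE f : f = Efact (ff0 f) (ff1 f).
Proof.
case: f => [[] u]; rewrite /Efact /mkfact /ff0 /ff1 /=; congr existT.
apply/ffunP => i; rewrite ffunE; case: i => [[|[|//]] Hi] /=.
  by congr (u _); apply: val_inj.
by congr (u _); apply: val_inj.
Qed.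

Lemma Efact_inj u v u' v' : Efact u v = Efact u' v' -> u = u' /\ v = v'.
Proof. by move=> e; split; [rewrite -(ff0E u v) e ff0E | rewrite -(ff1E u v) e ff1E]. Qed.

Definition small (N : nat) (D : ginstance) : Prop :=
  forall f, f \in D -> (ff0 f < N)%N /\ (ff1 f < N)%N.

Lemma small_mono N M D : (N <= M)%N -> small N D -> small M D.
Proof.
move=> NM h f /h [h0 h1]; split; exact: leq_trans NM.
Qed.

Definition smallL N : seq gfact := [seq Efact x y | x <- iota 0 N, y <- iota 0 N].

Lemma mem_smallL N f : (ff0 f < N)%N -> (ff1 f < N)%N -> f \in smallL N.
Proof.
move=> h0 h1; rewrite [f]gfactE; apply/allpairsP.
by exists (ff0 f, ff1 f); rewrite /= !mem_iota /= !add0n h0 h1.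
Qed.

Definition bnd (D : ginstance) : nat := \max_(f <- D) (maxn (ff0 f) (ff1 f)).+1.

Lemma small_bnd N D : (bnd D <= N)%N -> small N D.
Proof.
move=> h f fD; have := leq_trans (@leq_bigmax_seq _ _ xpredT (fun f => (maxn (ff0 f) (ff1 f)).+1) f fD isT) h.
rewrite /bnd => h2; have : (maxn (ff0 f) (ff1 f) < N)%N by []. by rewrite gtn_max => /andP[a b]; split.
Qed.

Section Tail.
Variables (R : realType) (P : ginstance -> R).
Hypothesis P0 : forall D, 0 <= P D.
Hypothesis P1 : \esum_(D in [set: ginstance]) (P D)%:E = 1%E.

Lemma tail e : 0 < e -> exists N, PrT P (~` [set D | small N D]) <= e.
Proof.
move=> e0.
have : ((1 - e)%:E < \esum_(D in [set: ginstance]) (P D)%:E)%E.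
  by rewrite P1 lte_fin ltrBlDr ltrDl.
move=> /ereal_sup_gt [_ [X [finX _]] <-] lt.
exists (\max_(D <- fset_set X) bnd D).
have : PrT P [set D | small (\max_(D <- fset_set X) bnd D) D] > 1 - e.
  rewrite -lte_fin -es_fin //; apply: (lt_le_trans lt); apply: esum_ge.
  exists X => //; split => // D XD; apply: small_bnd.
  by apply: (@leq_bigmax_seq _ _ xpredT bnd) => //; rewrite in_fset_set // inE.
have := PrT_compl P0 P1 [set D | small (\max_(D <- fset_set X) bnd D) D].
move=> h1 h2; lra.
Qed.
End Tail.


Lemma setb_eq (T : Type) (p q : T -> bool) : (forall D, p D = q D) ->
  [set D | p D] = [set D | q D].
Proof. by move=> h; apply/funext => D /=; rewrite h. Qed.

Section Uniq.
Variables (R : realType) (P1 P2 : ginstance -> R).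
Hypothesis P10 : forall D, 0 <= P1 D.
Hypothesis P11 : \esum_(D in [set: ginstance]) (P1 D)%:E = 1%E.
Hypothesis P20 : forall D, 0 <= P2 D.
Hypothesis P21 : \esum_(D in [set: ginstance]) (P2 D)%:E = 1%E.
Variables (phi1 phi2 : ginstance -> ginstance).
Hypothesis phi1s : forall D, (phi1 D `<=` D)%fset.
Hypothesis phi2s : forall D, (phi2 D `<=` D)%fset.
Hypothesis Hmu : forall s : seq gfact,
  PrT P1 [set D | all (fun f => f \in phi1 D) s] =
  PrT P2 [set D | all (fun f => f \in phi2 D) s].

Definition ev (phi : ginstance -> ginstance) (A B : seq gfact) : set ginstance :=
  [set D | all (fun f => f \in phi D) A && all (fun f => f \notin phi D) B].

Lemma ev_rec (P : ginstance -> R) phi A f B :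
  (forall D, 0 <= P D) -> \esum_(D in [set: ginstance]) (P D)%:E = 1%E ->
  PrT P (ev phi A (f :: B)) = PrT P (ev phi A B) - PrT P (ev phi (f :: A) B).
Proof.
move=> h0 h1; rewrite (PrT_split h0 h1 (ev phi A B) [set D | f \in phi D]).
have -> : ev phi A B `&` [set D | f \in phi D] = ev phi (f :: A) B.
  apply/funext => D /=; apply/propext; rewrite /ev /=.
  by case: (f \in phi D); case: (all _ A); case: (all _ B); split => // -[].
have -> : ev phi A B `&` ~` [set D | f \in phi D] = ev phi A (f :: B).
  apply/funext => D /=; apply/propext; rewrite /ev /=.
  by case: (f \in phi D); case: (all _ A); case: (all _ B); split => // -[].
lra.
Qed.

Lemma pi_eq B : forall A, PrT P1 (ev phi1 A B) = PrT P2 (ev phi2 A B).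
Proof.
elim: B => [|f B IH] A.
  have e : forall phi, ev phi A [::] = [set D | all (fun f => f \in phi D) A].
    by move=> phi; apply: setb_eq => D; rewrite andbT.
  by rewrite !e; exact: Hmu.
by rewrite (@ev_rec P1 phi1 A f B P10 P11) (@ev_rec P2 phi2 A f B P20 P21) !IH.
Qed.

Lemma push_le (Pa Pb : ginstance -> R) (pa pb : ginstance -> ginstance) :
  (forall D, 0 <= Pa D) -> \esum_(D in [set: ginstance]) (Pa D)%:E = 1%E ->
  (forall D, 0 <= Pb D) -> \esum_(D in [set: ginstance]) (Pb D)%:E = 1%E ->
  (forall D, (pb D `<=` D)%fset) ->
  (forall B A, PrT Pa (ev pa A B) = PrT Pb (ev pb A B)) ->
  forall D', PrT Pa [set D | pa D = D'] <= PrT Pb [set D | pb D = D'].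
Proof.
move=> ha0 ha1 hb0 hb1 pbs hev D'.
apply/ler_addgt0Pr => e e0.
have [N0 hN0] := tail hb0 hb1 e0.
pose N := maxn N0 (bnd D').
pose B := [seq f <- smallL N | f \notin D'].
pose A := (enum_fset D').
have h1 : PrT Pa [set D | pa D = D'] <= PrT Pa (ev pa A B).
  apply: PrT_le => // D /= eD; rewrite /ev /= /A /B -eD; apply/andP; split.
    by apply/allP => f.
  by apply/allP => f; rewrite mem_filter => /andP[].
apply: (le_trans h1); rewrite hev (PrT_split hb0 hb1 _ [set D | small N (pb D)]).
apply: lerD.
  apply: PrT_le => // D [/= /andP [/allP hA /allP hB] hs].
  apply/eqP; rewrite eqEfsubset; apply/andP; split; last first.
    by apply/fsubsetP => f fD; apply: hA.
  apply/fsubsetP => f fD; have [s0 s1] := hs f fD.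
  apply/negPn/negP => nf.
  have : f \in B by rewrite mem_filter nf mem_smallL.
  by move/hB; rewrite fD.
apply: le_trans hN0; apply: PrT_le => // D [_ /= hs] hsm.
apply: hs => f /(fsubsetP (pbs D)) /hsm.
by move=> [h0 h1']; split; rewrite /N; apply: (leq_trans _ (leq_maxl _ _)).
Qed.

Lemma uniq_push D' : PrT P1 [set D | phi1 D = D'] = PrT P2 [set D | phi2 D = D'].
Proof.
apply/eqP; rewrite eq_le; apply/andP; split.
  exact: (push_le P10 P11 P20 P21 phi2s pi_eq).
apply: (push_le P20 P21 P10 P11 phi1s) => B A; exact/esym/pi_eq.
Qed.
End Uniq.


Section Pws.
Variables (R : realType) (T : choiceType) (q : T -> R).

Fixpoint pws (L : seq T) : seq {fset T} :=
  match L with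
  | [::] => [:: fset0]
  | x :: L' => pws L' ++ [seq (x |` D)%fset | D <- pws L']
  end.

Definition W (L : seq T) (D : {fset T}) : R :=
  \prod_(f <- L) (if f \in D then q f else 1 - q f).

Lemma mem_pws L D : D \in pws L <-> {subset D <= L}.
Proof.
elim: L D => [|x L IH] D /=.
  rewrite inE; split => [/eqP -> y|h]; first by rewrite inE.
  apply/eqP/fsetP => y; rewrite inE; apply/negP => /h.
  by rewrite in_nil.
rewrite mem_cat; split.
  case/orP => [/IH h y /h|]; first by rewrite inE orbC => ->.
  move/mapP => [D0 /IH h ->] y; rewrite !inE => /orP[->//|/h ->].
  by rewrite orbT.
move=> h; case: (boolP (x \in D)) => xD.
  apply/orP; right; apply/mapP; exists (D `\ x)%fset; last by rewrite fsetD1K.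
  apply/IH => y; rewrite !inE => /andP[yx /h].
  by rewrite inE (negPf yx).
apply/orP; left; apply/IH => y yD; have := h y yD; rewrite inE.
by case/orP => // /eqP ey; move: xD; rewrite -ey yD.
Qed.

Lemma uniq_pws L : uniq L -> uniq (pws L).
Proof.
elim: L => [|x L IH] //= /andP[xL uL].
rewrite cat_uniq IH //= map_inj_in_uniq ?IH // ?andbT.
  apply/hasPn => _ /mapP [D DL ->]; apply/negP => /mem_pws h.
  by move: xL; rewrite (h x) // !inE eqxx.
move=> D1 D2 /mem_pws h1 /mem_pws h2 e.
apply/fsetP => y; have := congr1 (fun A => y \in A) e; rewrite /= !inE.
case: (eqVneq y x) => [->|] //=.
by case: (boolP (x \in D1)) => [/h1|]; case: (boolP (x \in D2)) => [/h2|] //;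
  rewrite ?(negPf xL).
Qed.

Lemma W_ext L D D' : (forall f, f \in L -> (f \in D) = (f \in D')) -> W L D = W L D'.
Proof. by move=> h; apply: eq_big_seq => f /h ->. Qed.

Lemma sum_pws L S : uniq L -> uniq S ->
  \sum_(D <- pws L) (if all (fun f => f \in D) S then W L D else 0) =
  \prod_(f <- S) (if f \in L then q f else 0).
Proof.
elim: L S => [|x L IH] S /=.
  move=> _ _; rewrite big_seq1 /W big_nil.
  case: S => [|f S] /=; first by rewrite big_nil.
  by rewrite big_cons mul0r.
move=> /andP[xL uL] uS; rewrite big_cat big_map /=.
have Wx D : D \in pws L -> W (x :: L) D = (1 - q x) * W L D.
  move=> /mem_pws h; rewrite /W big_cons; case: ifP => // /h.
  by rewrite (negPf xL).
have WxU D : D \in pws L -> W (x :: L) (x |` D)%fset = q x * W L D.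
  move=> /mem_pws h; rewrite /W big_cons !inE eqxx /=; congr (_ * _).
  apply: eq_big_seq => f fL; rewrite !inE; case: (eqVneq f x) => // efx.
  by move: xL; rewrite -efx fL.
have allU D : all (fun f => f \in (x |` D)%fset) S =
              all (fun f => f \in D) [seq f <- S | f != x].
  rewrite all_filter; apply: eq_all => f; rewrite !inE.
  by case: (eqVneq f x).
rewrite [X in X + _](eq_big_seq (fun D : {fset T} => (1 - q x) * (if all (fun f => f \in D) S then W L D else 0)));
  last by move=> D DL; rewrite Wx //; case: ifP; rewrite ?mulr0.
rewrite [X in _ + X](eq_big_seq (fun D : {fset T} => q x * (if all (fun f => f \in D) [seq f <- S | f != x] then W L D else 0)));
  last by move=> D DL /=; rewrite allU WxU //; case: ifP; rewrite ?mulr0.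
rewrite -!big_distrr /=.
case: (boolP (x \in S)) => xS.
  rewrite big1_seq ?mulr0 ?add0r; last first.
    move=> D /andP[_ /mem_pws h]; case: ifP => // /allP /(_ x xS) /h.
    by rewrite (negPf xL).
  rewrite IH ?filter_uniq //.
  rewrite (perm_big _ (perm_to_rem xS)) big_cons inE eqxx /=.
  rewrite -(rem_filter x uS); congr (_ * _); apply: eq_big_seq => f.
  rewrite (mem_rem_uniq x uS) inE => /andP [fx _]; by rewrite inE (negPf fx).
have -> : [seq f <- S | f != x] = S.
  apply/all_filterP/allP => f fS; apply/eqP => efx; by move: xS; rewrite -efx fS.
rewrite IH // -mulrDl subrK mul1r; apply: eq_big_seq => f fS; rewrite inE.
case: (eqVneq f x) => // efx; by move: xS; rewrite -efx fS.
Qed.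
End Pws.


Section Constr.
Variables (R : realType) (a b : nat -> nat).
Hypothesis hab : forall i, (0 < i)%N -> a i <> b i.
Hypothesis hinj : forall i j, (0 < i)%N -> (0 < j)%N -> i <> j ->
     [fset a i; b i]%fset <> [fset a j; b j]%fset.

Definition fA i := Efact (a i) (b i).
Definition fB i := Efact (b i) (a i).
Definition blk (f : gfact) i := (0 < i)%N && ((f == fA i) || (f == fB i)).

Lemma blk_uniq f i j : blk f i -> blk f j -> i = j.
Proof.
move=> /andP[i0 hi] /andP[j0 hj].
case: (eqVneq i j) => // nij; exfalso; apply: (hinj i0 j0 (elimN eqP nij)).
move: hi hj; rewrite /fA /fB.
by case/orP => /eqP -> /orP [] /eqP /Efact_inj [-> ->] //; rewrite fsetUC.
Qed.

Definition ix (f : gfact) : nat :=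
  match pselect (exists i, blk f i) with
  | left h => projT1 (cid h)
  | right _ => 0%N
  end.

Lemma ixP f i : blk f i -> ix f = i.
Proof.
move=> h; rewrite /ix; case: pselect => [h'|[]]; last by exists i.
by case: (cid h') => j /= hj; apply: blk_uniq hj h.
Qed.

Lemma ix0 f : (forall i, ~~ blk f i) -> ix f = 0%N.
Proof.
move=> h; rewrite /ix; case: pselect => // h'.
by case: (cid h') => j /= hj; move: (h j); rewrite hj.
Qed.

Definition rr (i : nat) : R := (i%:R ^+ 2)^-1.
Definition qf (f : gfact) : R := if (0 < ix f)%N then rr (ix f) else 0.

Lemma blkA i : (0 < i)%N -> blk (fA i) i.
Proof. by move=> i0; rewrite /blk i0 eqxx. Qed.
Lemma blkB i : (0 < i)%N -> blk (fB i) i.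
Proof. by move=> i0; rewrite /blk i0 eqxx orbT. Qed.

Lemma qfA i : (0 < i)%N -> qf (fA i) = rr i.
Proof. by move=> i0; rewrite /qf (ixP (blkA i0)) i0. Qed.
Lemma qfB i : (0 < i)%N -> qf (fB i) = rr i.
Proof. by move=> i0; rewrite /qf (ixP (blkB i0)) i0. Qed.
Lemma qf0 f : (forall i, ~~ blk f i) -> qf f = 0.
Proof. by move=> h; rewrite /qf ix0. Qed.

Lemma rr_ge0 i : 0 <= rr i.
Proof. by rewrite /rr invr_ge0 exprn_ge0 // ler0n. Qed.
Lemma rr_le1 i : (0 < i)%N -> rr i <= 1.
Proof.
move=> i0; rewrite /rr invf_le1 ?exprn_ege1 ?exprn_gt0 ?ltr0n ?ler1n //.
Qed.

Lemma qf_ge0 f : 0 <= qf f.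
Proof. by rewrite /qf; case: ifP => // _; apply: rr_ge0. Qed.
Lemma qf_le1 f : qf f <= 1.
Proof. by rewrite /qf; case: ifP => // h; apply: rr_le1. Qed.

Lemma blk_ix f : (exists i, blk f i) \/ (forall i, ~~ blk f i).
Proof.
case: (pselect (exists i, blk f i)) => h; [by left|right => i].
by apply/negP => hi; apply: h; exists i.
Qed.

Definition LK (K : nat) : seq gfact := flatten [seq [:: fA i; fB i] | i <- iota 1 K].

Lemma mem_LK K f : (f \in LK K) = has (fun i => (f == fA i) || (f == fB i)) (iota 1 K).
Proof.
elim: K => [|K IH] //.
have := iotaD 1 K 1; rewrite addn1 => e.
rewrite /LK e map_cat flatten_cat mem_cat -/(LK K) IH has_cat.
by rewrite /= !inE orbF add1n.
Qed.

Lemma LK_blk K f : f \in LK K -> blk f (ix f) /\ (ix f <= K)%N.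
Proof.
rewrite mem_LK => /hasP [i]; rewrite mem_iota add1n ltnS => /andP[i0 iK] h.
have bi : blk f i by rewrite /blk i0.
by rewrite (ixP bi).
Qed.

Lemma blk_LK K f i : blk f i -> (i <= K)%N -> f \in LK K.
Proof.
move=> /andP[i0 h] iK; rewrite mem_LK; apply/hasP; exists i => //.
by rewrite mem_iota add1n ltnS i0.
Qed.

Lemma LKS K : LK K.+1 = LK K ++ [:: fA K.+1; fB K.+1].
Proof.
have := iotaD 1 K 1; rewrite addn1 => e.
by rewrite /LK e map_cat flatten_cat /= add1n.
Qed.

Lemma notin_LK K j : (K < j)%N -> fA j \notin LK K /\ fB j \notin LK K.
Proof.
move=> Kj; have j0 : (0 < j)%N by apply: leq_ltn_trans Kj.
split; apply/negP => /LK_blk [h1 h2].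
  by move: (ixP (blkA j0)) h2 => ->; rewrite leqNgt Kj.
by move: (ixP (blkB j0)) h2 => ->; rewrite leqNgt Kj.
Qed.

Lemma fAB i : (0 < i)%N -> fA i != fB i.
Proof.
move=> i0; apply/eqP => /Efact_inj [e _]; exact: hab i0 e.
Qed.

Lemma uniq_LK K : uniq (LK K).
Proof.
elim: K => [|K IH] //; rewrite LKS cat_uniq IH /= andbT !inE fAB // andbT.
have [h1 h2] := notin_LK (ltnSn K).
by rewrite (negPf h1) (negPf h2).
Qed.

Lemma LK_mono K M : (K <= M)%N -> {subset LK K <= LK M}.
Proof.
move=> KM f /LK_blk [h1 h2]; apply: blk_LK h1 (leq_trans h2 KM).
Qed.

Definition TK (K : nat) : R := (K%:R / K.+1%:R) ^+ 2.

Lemma TK_ge0 K : 0 <= TK K.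
Proof. by rewrite /TK exprn_ge0 // divr_ge0. Qed.
Lemma TK_le1 K : TK K <= 1.
Proof.
rewrite /TK exprn_ile1 ?divr_ge0 // ler_pdivrMr ?ltr0n // mul1r ler_nat.
exact: leqnSn.
Qed.

Definition Qv (D : ginstance) K : R := W qf (LK K) D * TK K.

Lemma QvS D K : {subset D <= LK K} -> Qv D K.+1 = Qv D K.
Proof.
move=> sD; rewrite /Qv /W LKS big_cat /= !big_cons big_nil.
have [h1 h2] := notin_LK (ltnSn K).
have nA : fA K.+1 \notin D by apply/negP => /sD; rewrite (negPf h1).
have nB : fB K.+1 \notin D by apply/negP => /sD; rewrite (negPf h2).
rewrite (negPf nA) (negPf nB) qfA // qfB // mulr1 -mulrA; congr (_ * _).
rewrite /TK /rr -!natr1; set n : R := K%:R.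
have n0 : 0 <= n by rewrite ler0n.
have nz1 : n + 1 != 0 by apply/negP => /eqP; lra.
have nz2 : n + 1 + 1 != 0 by apply/negP => /eqP; lra.
set u := (n + 1)^-1; set v := (n + 1 + 1)^-1.
have e1 : (n + 1) * u = 1 by rewrite mulfV.
have e2 : (n + 1 + 1) * v = 1 by rewrite mulfV.
have e1' : ((n + 1) * u) ^+ 2 = 1 by rewrite e1 expr1n.
rewrite -exprVn -/u.
have hu : 1 - u ^+ 2 = n * (n + 1 + 1) * u ^+ 2.
  rewrite -[X in X - _ = _]e1'; lra.
rewrite hu.
transitivity (n ^+ 2 * u ^+ 2 * ((n + 1) * u) ^+ 2 * ((n + 1 + 1) * v) ^+ 2).
  lra.
by rewrite e1 e2 !expr1n !mulr1 exprMn.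
Qed.

Lemma Qv_indep D K M : {subset D <= LK K} -> (K <= M)%N -> Qv D M = Qv D K.
Proof.
move=> sD /subnK <-; elim: (M - K)%N => [|n IH]; first by rewrite add0n.
rewrite addSn QvS // => f /sD; apply: LK_mono; exact: leq_addl.
Qed.

Definition Q (D : ginstance) : R :=
  match pselect (exists K, {subset D <= LK K}) with
  | left h => Qv D (projT1 (cid h))
  | right _ => 0
  end.

Lemma QE D K : {subset D <= LK K} -> Q D = Qv D K.
Proof.
move=> sD; rewrite /Q; case: pselect => [h|[]]; last by exists K.
case: (cid h) => K0 /= s0.
rewrite -(Qv_indep s0 (leq_maxl K0 K)) -(Qv_indep sD (leq_maxr K0 K)) //.
Qed.

Lemma Q0 D : ~ (exists K, {subset D <= LK K}) -> Q D = 0.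
Proof. by rewrite /Q; case: pselect. Qed.

Lemma W_ge0 L D : 0 <= W qf L D.
Proof.
rewrite /W; apply: prodr_ge0 => f _; case: ifP => _; first exact: qf_ge0.
by rewrite subr_ge0 qf_le1.
Qed.

Lemma Q_ge0 D : 0 <= Q D.
Proof.
rewrite /Q; case: pselect => // h; rewrite /Qv mulr_ge0 ?TK_ge0 ?W_ge0 //.
Qed.


Lemma sum_sub_le (s1 s2 : seq ginstance) (g : ginstance -> R) (p : pred ginstance) :
  uniq s1 -> uniq s2 -> (forall x, 0 <= g x) ->
  (forall x, x \in s1 -> g x != 0 -> x \in s2 /\ p x) ->
  \sum_(x <- s1) g x <= \sum_(x <- s2 | p x) g x.
Proof.
move=> u1 u2 g0 h.
rewrite (bigID (fun x => g x != 0)) /= [X in _ + X]big1 ?addr0; last first.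
  by move=> x /negPn /eqP.
rewrite -big_filter; set t := [seq x <- s1 | g x != 0].
rewrite [X in _ <= X](bigID (fun x => x \in t)) /=.
rewrite -[X in _ <= X + _](@big_filter _ _ _ _ _ (fun x => p x && (x \in t))).
rewrite [X in _ <= X + _](perm_big t).
  by rewrite lerDl sumr_ge0.
apply: uniq_perm; [by rewrite filter_uniq | by rewrite filter_uniq | ].
move=> x; rewrite !mem_filter; apply/idP/idP => [/andP[/andP [_ ->]] //|/andP [gx xs1]].
by have [-> ->] := h x xs1 gx; rewrite gx xs1.
Qed.

Lemma es_lb (s : seq ginstance) E : uniq s -> (forall D, D \in s -> E D) ->
  ((\sum_(D <- s) Q D)%:E <= \esum_(D in E) (Q D)%:E)%E.
Proof.
move=> us sE; rewrite -sumEFin.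
apply: esum_ge; exists [set` s].
  by split; [exact: finite_seq| move=> D /= /sE].
by rewrite fsbig_seq.
Qed.

Lemma sum_pws_Q K S : uniq S ->
  \sum_(D <- pws (LK K) | all (fun f => f \in D) S) Q D =
  (\prod_(f <- S) (if f \in LK K then qf f else 0)) * TK K.
Proof.
move=> uS; rewrite -sum_pws ?uniq_LK // big_distrl big_mkcond /=.
apply: eq_big_seq => D /mem_pws sD; rewrite (QE sD) /Qv.
by case: ifP => _; rewrite ?mul0r.
Qed.

Lemma prod_LK K S : (\max_(f <- S) ix f <= K)%N ->
  \prod_(f <- S) (if f \in LK K then qf f else 0) = \prod_(f <- S) qf f.
Proof.
move=> hK; apply: eq_big_seq => f fS; case: ifP => // nf.
case: (blk_ix f) => [[i bi]|nb]; last by rewrite qf0.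
exfalso; move: nf; rewrite (blk_LK bi) //.
rewrite -(ixP bi); apply: leq_trans hK.
exact: (@leq_bigmax_seq _ _ xpredT ix).
Qed.

Lemma qprod_ge0 S : 0 <= \prod_(f <- S) qf f.
Proof. by apply: prodr_ge0 => f _; apply: qf_ge0. Qed.
Lemma qprod_le1 S : \prod_(f <- S) qf f <= 1.
Proof.
by apply: prodr_ile1 => f _; rewrite qf_ge0 qf_le1.
Qed.

Lemma TK_lb (e : R) : 0 < e -> exists K0, forall K, (K0 <= K)%N -> 1 - e <= TK K.
Proof.
move=> e0; exists (Num.Def.archi_bound (2 / e)) => K hK.
have hb := archi_boundP (ltW (divr_gt0 (ltr0Sn R 1) e0)).
rewrite /TK -natr1; set n : R := K%:R.
have n0 : 0 <= n by rewrite ler0n.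
have hn : 2 / e < n + 1.
  apply: (lt_le_trans hb); apply: (@le_trans _ _ n); [by rewrite ler_nat | lra].
have nz1 : n + 1 != 0 by apply/negP => /eqP; lra.
set w := (n + 1)^-1.
have ew : (n + 1) * w = 1 by rewrite mulfV.
have w0 : 0 <= w by rewrite invr_ge0; lra.
have nw : n / (n + 1) = 1 - w.
  apply: (@mulfI _ (n + 1)) => //; rewrite mulrBr ew mulr1 mulrC -mulrA mulVf // mulr1.
  lra.
have h2 : 2 * w < e.
  have h : 2 < (n + 1) * e by rewrite -ltr_pdivrMr.
  rewrite /w -/(2 / (n + 1)) ltr_pdivrMr; last lra.
  by rewrite mulrC.
rewrite nw; have := sqr_ge0 w; rewrite expr2 => hw; lra.
Qed.

Lemma Q_es (S : seq gfact) : uniq S ->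
  \esum_(D in [set D : ginstance | all (fun f => f \in D) S]) (Q D)%:E = (\prod_(f <- S) qf f)%:E.
Proof.
move=> uS; set E := [set D | _]; set c := \prod_(f <- S) qf f.
have ub : (\esum_(D in E) (Q D)%:E <= c%:E)%E.
  apply: ge_ereal_sup => _ [X [finX XE] <-].
  rewrite fsbig_finite // sumEFin lee_fin.
  pose kD (D : ginstance) : nat := match pselect (exists K, {subset D <= LK K}) with
    left h => projT1 (cid h) | right _ => 0%N end.
  pose K := \max_(D <- fset_set X) kD D.
  apply: (le_trans (y := \sum_(D <- pws (LK K) | all (fun f => f \in D) S) Q D)).
    apply: sum_sub_le; rewrite ?fset_uniq ?uniq_pws ?uniq_LK //; first exact: Q_ge0.
    move=> x xX Qx; split; last by move: xX; rewrite in_fset_set // inE => /XE.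
    have kK : (kD x <= K)%N by apply: (@leq_bigmax_seq _ _ xpredT kD).
    move: kK Qx; rewrite /kD; case: pselect => [h|hn]; last by rewrite Q0 // eqxx.
    case: (cid h) => K1 /= s1 K1K _; apply/mem_pws => f /s1.
    exact: LK_mono.
  rewrite sum_pws_Q //; apply: (le_trans (ler_piMr _ (TK_le1 K))).
    by apply: prodr_ge0 => f _; case: ifP => // _; apply: qf_ge0.
  apply: ler_prod => f _; case: ifP => _; rewrite ?lexx ?qf_ge0 //.
have lb : forall K, (\max_(f <- S) ix f <= K)%N ->
    ((c * TK K)%:E <= \esum_(D in E) (Q D)%:E)%E.
  move=> K hK; rewrite /c -(prod_LK hK) -sum_pws_Q // -big_filter.
  apply: es_lb; first by rewrite filter_uniq ?uniq_pws ?uniq_LK.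
  by move=> D; rewrite mem_filter => /andP[].
have e0 : (0 <= \esum_(D in E) (Q D)%:E)%E.
  by apply: esum_ge0 => D _; rewrite lee_fin Q_ge0.
have fin : \esum_(D in E) (Q D)%:E \is a fin_num.
  by rewrite ge0_fin_numE // (le_lt_trans ub) // ltry.
move: ub lb e0; rewrite -(fineK fin); set x := fine _ => ub lb _.
congr (_%:E); apply/eqP; rewrite eq_le -lee_fin ub /=.
apply/ler_addgt0Pr => e e0.
have [K0 hK0] := TK_lb e0.
set K := maxn K0 (\max_(f <- S) ix f).
have := lb K (leq_maxr _ _); rewrite lee_fin => h.
have := hK0 K (leq_maxl _ _) => h2.
have c0 := qprod_ge0 S; have c1 := qprod_le1 S.
have : c * (1 - e) <= c * TK K by rewrite ler_wpM2l.
rewrite -/c in c0 c1 *; nra.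
Qed.

Lemma Q_single f : PrT Q [set D : ginstance | f \in D] = qf f.
Proof.
have -> : [set D : ginstance | f \in D] = [set D | all (fun g => g \in D) [:: f]].
  by apply/funext => D /=; rewrite andbT.
by rewrite /PrT Q_es // big_seq1.
Qed.

Lemma Q_total : \esum_(D in [set: ginstance]) (Q D)%:E = 1%E.
Proof.
have -> : [set: ginstance] = [set D | all (fun g => g \in D) [::]].
  by apply/funext => D /=; apply/propext.
by rewrite Q_es // big_nil.
Qed.

Lemma Q_TI : is_TI Q.
Proof.
split; first by split; [exact: Q_ge0 | exact: Q_total].
move=> s us; rewrite [LHS]/Pr -/(PrT Q _) /PrT Q_es //=.
by apply: eq_bigr => f _; rewrite -Q_single.
Qed.

End Constr.


Definition revf (f : gfact) : gfact := Efact (ff1 f) (ff0 f).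

Lemma revfK : involutive revf.
Proof. by move=> f; rewrite /revf ff0E ff1E -gfactE. Qed.

Definition Vf (D : ginstance) : ginstance := [fset f in D | revf f \in D]%fset.

Lemma in_Vf D f : (f \in Vf D) = (f \in D) && (revf f \in D).
Proof. by rewrite /Vf !inE. Qed.

Lemma Vf_sub D : (Vf D `<=` D)%fset.
Proof. by apply/fsubsetP => f; rewrite in_Vf => /andP[]. Qed.

Definition Vq : cq gar :=
  CAnd (@CRel gsig gar tt (fun i => TVar (val i)))
       (@CRel gsig gar tt (fun i => TVar (1 - val i))).

Definition V : cq_view gar gar := fun r' => @CQk gsig gar (gar r') Vq (fun i => val i).

Lemma V_wf : cq_view_wf V.
Proof.
move=> r'; split; first exact: val_inj.
move=> v hv; have v2 : (v < 2)%N.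
  move: hv; rewrite /V /= mem_cat => /orP [] /flattenP [s /mapP [i _ ->]];
    rewrite inE => /eqP ->; case: i => [[|[|]]] //.
by apply/mapP; exists (Ordinal v2); rewrite ?mem_enum.
Qed.

Lemma mkfactE (u : {ffun 'I_2 -> nat}) :
  @mkfact gsig gar tt u = Efact (u ord0) (u ord_max).
Proof. by rewrite [LHS]gfactE. Qed.

Lemma sat_V D (u : {ffun 'I_2 -> nat}) :
  ((forall i, ad_dom (V tt) D (u i)) /\
   forall nu : nat -> nat, (forall i, nu (cq_head (V tt) i) = u i) ->
     cq_sat D (ad_dom (V tt) D) nu (cq_body (V tt)))
  <-> (@mkfact gsig gar tt u \in D /\ revf (@mkfact gsig gar tt u) \in D).
Proof.
have e0 (nu : nat -> nat) : (forall i : 'I_2, nu (val i) = u i) ->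
    @mkfact gsig gar tt [ffun i : 'I_(gar tt) => term_val nu (TVar (val i))] =
    @mkfact gsig gar tt u.
  move=> h; rewrite /mkfact; congr existT; apply/ffunP => i; rewrite ffunE /=.
  exact: h.
have e1 (nu : nat -> nat) : (forall i : 'I_2, nu (val i) = u i) ->
    @mkfact gsig gar tt [ffun i : 'I_(gar tt) => term_val nu (TVar (1 - val i))] =
    revf (@mkfact gsig gar tt u).
  move=> h; rewrite [LHS]gfactE /revf /ff0 /ff1 /= !ffunE /=.
  by congr Efact; [exact: (h ord_max) | exact: (h ord0)].
split.
  move=> [_ h].
  pose nu := fun w : nat => if w == 0%N then u ord0 else u ord_max.
  have hnu : forall i : 'I_2, nu (val i) = u i.
    by move=> [[|[|//]] Hi]; rewrite /nu /=; congr (u _); apply: val_inj.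
  have [s1 s2] := h nu hnu.
  by split; [move: s1; rewrite (e0 nu hnu) | move: s2; rewrite (e1 nu hnu)].
move=> [h1 h2]; split.
  by move=> i; left; exists (@mkfact gsig gar tt u) => //; exists i.
by move=> nu hnu; split => /=; [rewrite (e0 nu hnu) | rewrite (e1 nu hnu)].
Qed.

Lemma view_imageE D D' : view_image V D D' <-> D' = Vf D.
Proof.
split.
  move=> h; apply/fsetP => -[[] u]; rewrite in_Vf.
  have := h tt u; rewrite sat_V => -[h1 h2].
  apply/idP/idP => [/h1 [-> ->] //| /andP[p1 p2]]; exact: h2.
move=> -> [] u; rewrite sat_V in_Vf; split => [/andP[-> ->] //|[-> ->] //].
Qed.

Lemma PrE (R : realType) (P : ginstance -> R) E : Pr P E = PrT P E.
Proof. by []. Qed.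

Section Mu.
Variables (R : realType) (a b : nat -> nat) (P : ginstance -> R).
Hypothesis hab : forall i, (0 < i)%N -> a i <> b i.
Hypothesis hinj : forall i j, (0 < i)%N -> (0 < j)%N -> i <> j ->
     [fset a i; b i]%fset <> [fset a j; b j]%fset.
Hypothesis hP : edge_indep_unbounded_graph P.
Hypothesis h4 : forall i, (0 < i)%N ->
     Pr P [set D | Efact (a i) (b i) \in D] = (i%:R ^+ 4)^-1 /\
     Pr P [set D | Efact (b i) (a i) \in D] = (i%:R ^+ 4)^-1.
Hypothesis h5 : forall u v, (forall i, (0 < i)%N ->
                 (u, v) <> (a i, b i) /\ (u, v) <> (b i, a i)) ->
     Pr P [set D | Efact u v \in D] = 0.

Let P0 : forall D, 0 <= P D. Proof. by case: hP => -[]. Qed.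
Let P1 : \esum_(D in [set: ginstance]) (P D)%:E = 1%E. Proof. by case: hP => -[]. Qed.

Lemma pw D : P D != 0 -> simple_graph D /\ undirected_graph D.
Proof.
move=> nz; case: hP => _ [h _]; apply: h; rewrite /possible_world lt_def nz.
exact: P0.
Qed.

Lemma revf_in D f : P D != 0 -> f \in D -> revf f \in D.
Proof. by move=> /pw [_ h] fD; apply: h; rewrite -gfactE. Qed.

Lemma noloop D f : P D != 0 -> f \in D -> ff0 f != ff1 f.
Proof.
move=> /pw [h _] fD; apply/eqP => e; move: fD; rewrite [f]gfactE e.
by rewrite (negPf (h _)).
Qed.

Lemma qf_loop f : ff0 f = ff1 f -> qf R a b f = 0.
Proof.
move=> e; apply: (qf0 R) => i; apply/negP => /andP [i0 /orP []] /eqP ef;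
  move: e; rewrite ef ?ff0E ?ff1E => e; apply: (hab i0) => //.
Qed.

Lemma marg f : PrT P [set D | f \in D] = qf R a b f * qf R a b (revf f).
Proof.
case: (blk_ix a b f) => [[i /andP [i0 /orP [] /eqP ->]]|nb].
- have -> : revf (fA a b i) = fB a b i by rewrite /revf /fA ff0E ff1E.
  rewrite (qfA R hinj i0) (qfB R hinj i0) -PrE (h4 i0).1 /rr -invfM -exprD.
  by [].
- have -> : revf (fB a b i) = fA a b i by rewrite /revf /fB ff0E ff1E.
  rewrite (qfA R hinj i0) (qfB R hinj i0) -PrE (h4 i0).2 /rr -invfM -exprD.
  by [].
rewrite (qf0 R nb) mul0r -PrE [f]gfactE; apply: h5 => i i0.
split => -[e0 e1]; move: (nb i); rewrite /blk i0 /fA /fB [f]gfactE e0 e1 eqxx //.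
by rewrite orbT.
Qed.
Lemma fset2_ord x0 x1 y0 y1 : (x0 < x1)%N -> (y0 < y1)%N ->
  [fset x0; x1]%fset = [fset y0; y1]%fset -> x0 = y0 /\ x1 = y1.
Proof.
move=> hx hy e.
have k1 : x0 \in [fset y0; y1]%fset by rewrite -e !inE eqxx.
have k2 : x1 \in [fset y0; y1]%fset by rewrite -e !inE eqxx orbT.
have k3 : y0 \in [fset x0; x1]%fset by rewrite e !inE eqxx.
have k4 : y1 \in [fset x0; x1]%fset by rewrite e !inE eqxx orbT.
move: k1 k2 k3 k4; rewrite !inE.
move=> /orP [] /eqP ? /orP [] /eqP ? /orP [] /eqP ? /orP [] /eqP ?; lia.
Qed.

Lemma mu_closed (t : seq gfact) : uniq t -> (forall f, f \in t -> revf f \in t) ->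
  PrT P [set D | all (fun f => f \in D) t] = \prod_(f <- t) qf R a b f.
Proof.
move=> ut ct.
case: (boolP (has (fun f => ff0 f == ff1 f) t)) => [/hasP [f ft /eqP loopf] | /hasPn nl].
  rewrite (big_rem f ft) /= qf_loop // mul0r.
  rewrite (@PrT_ext _ _ P _ set0); first by rewrite /PrT esum_set0.
  move=> D nz; split => // /allP /(_ f ft) fD.
  by move: (noloop nz fD); rewrite loopf eqxx.
have nl' f : f \in t -> ff0 f != ff1 f by move=> /nl.
set t' := [seq f <- t | (ff0 f < ff1 f)%N].
have rev_lt f : f \in t -> ~~ (ff0 f < ff1 f)%N -> (ff0 (revf f) < ff1 (revf f))%N.
  move=> ft; rewrite /revf ff0E ff1E -leqNgt leq_eqVlt eq_sym (negPf (nl' f ft)).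
  by [].
have perm : perm_eq t (t' ++ map revf t').
  apply: uniq_perm => //.
    rewrite cat_uniq filter_uniq // map_inj_uniq ?filter_uniq //; last first.
      exact: can_inj revfK.
    rewrite andbT; apply/hasPn => _ /mapP [g gt' ->]; apply/negP.
    move: gt'; rewrite !mem_filter /revf ff0E ff1E => /andP [lt _] /andP [lt2 _].
    by move: (ltn_trans lt lt2); rewrite ltnn.
  move=> f; rewrite mem_cat mem_filter; apply/idP/idP.
    move=> ft; case: (boolP (ff0 f < ff1 f)%N) => [lt|nlt]; first by apply/orP; left; apply/andP.
    apply/orP; right; apply/mapP; exists (revf f); last by rewrite revfK.
    by rewrite mem_filter rev_lt // ct.
  case/orP => [/andP [] //|/mapP [g]]; rewrite mem_filter => /andP [_ gt] ->.
  exact: ct.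
rewrite (perm_big _ perm) big_cat big_map /=.
have ext : PrT P [set D | all (fun f => f \in D) t] =
           PrT P [set D | all (fun f => f \in D) t'].
  apply: PrT_ext => D nz; split.
    by move=> /allP h; apply/allP => f; rewrite mem_filter => /andP [_ /h].
  move=> /allP h; apply/allP => f ft.
  case: (boolP (ff0 f < ff1 f)%N) => lt; first by apply: h; rewrite mem_filter lt.
  rewrite -[f]revfK; apply: (revf_in nz); apply: h.
  by rewrite mem_filter rev_lt // ct.
rewrite ext; case: hP => _ [_ [hind _]].
have := hind [seq (ff0 f, ff1 f) | f <- t'].
rewrite all_map; move=> h; rewrite !PrE in h.
have e1 : [set D : ginstance | all (fun e => Efact e.1 e.2 \in D) [seq (ff0 f, ff1 f) | f <- t']]
        = [set D | all (fun f => f \in D) t'].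
  apply/funext => D /=; rewrite all_map; congr is_true; apply: eq_all => f /=.
  by rewrite -gfactE.
rewrite -e1 h.
- rewrite big_map (eq_bigr (fun f => qf R a b f * qf R a b (revf f))); first by rewrite big_split.
  move=> f _ /=; rewrite -gfactE; exact: marg.
- apply/allP => f; rewrite mem_filter => /andP [lt _] /=; by rewrite neq_ltn lt.
rewrite -map_comp map_inj_in_uniq ?filter_uniq //.
move=> f g; rewrite !mem_filter => /andP [lf _] /andP [lg _] /= e.
have [e0 e1'] := fset2_ord lf lg e.
by rewrite [f]gfactE [g]gfactE e0 e1'.
Qed.

Lemma mu_eq (s : seq gfact) :
  PrT P [set D | all (fun f => f \in D) s] =
  PrT (Q R a b) [set D | all (fun f => f \in Vf D) s].
Proof.
set t := undup (s ++ map revf s).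
have ht : forall D : ginstance, all (fun f => f \in D) t =
    all (fun f => f \in D) s && all (fun f => revf f \in D) s.
  by move=> D; rewrite (eq_all_r (mem_undup _)) all_cat all_map.
have -> : [set D | all (fun f => f \in Vf D) s] = [set D | all (fun f => f \in D) t].
  apply/funext => D /=; rewrite ht -all_predI; congr is_true; apply: eq_all => f.
  by rewrite in_Vf.
rewrite /PrT (Q_es R hab hinj) ?undup_uniq //= -/(PrT P _).
rewrite -mu_closed ?undup_uniq //; last first.
  move=> f; rewrite !mem_undup !mem_cat => /orP [fs|/mapP [g gs ->]].
    by apply/orP; right; apply: map_f.
  by rewrite revfK gs.
apply: PrT_ext => D nz; rewrite /= ht; split => [h|/andP [] //].
apply/andP; split => //; apply/allP => f /(allP h) fD; exact: revf_in.
Qed.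

End Mu.


Unset Implicit Arguments.
Local Open Scope classical_set_scope.
Local Open Scope fset_scope.
Local Open Scope ring_scope.

Theorem lemma7p12 (R : realType) (a b : nat -> nat) (P : ginstance -> R) :
  (forall i, (0 < i)%N -> a i <> b i) ->
  (forall i j, (0 < i)%N -> (0 < j)%N -> i <> j ->
     [fset a i; b i] <> [fset a j; b j]) ->
  edge_indep_unbounded_graph P ->
  (forall i, (0 < i)%N ->
     Pr P [set D | Efact (a i) (b i) \in D] = (i%:R ^+ 4)^-1 /\
     Pr P [set D | Efact (b i) (a i) \in D] = (i%:R ^+ 4)^-1) ->
  (forall u v, (forall i, (0 < i)%N ->
                 (u, v) <> (a i, b i) /\ (u, v) <> (b i, a i)) ->
     Pr P [set D | Efact u v \in D] = 0) ->
  in_CQ_TI P.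
Proof.
move=> hab hinj hP h4 h5.
have [[P0 P1] _] := hP.
exists gsig, gar, (Q R a b), V.
split; first exact: (Q_TI R hab hinj).
split; first exact: V_wf.
move=> D'.
rewrite /image_PDB -/(PrT (Q R a b) _).
have -> : [set D | view_image V D D'] = [set D | Vf D = D'].
  by apply/funext => D /=; apply/propext; rewrite view_imageE; split => ->.
rewrite -(PrT_set1 P0 D').
apply: (@uniq_push R P (Q R a b) P0 P1 (Q_ge0 R a b) (Q_total R hab hinj) id Vf).
- by move=> D; exact: fsubset_refl.
- exact: Vf_sub.
- exact: (mu_eq hab hinj hP h4 h5).
Qed.
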